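(* Fix $n\ge1$. There exist $c_n>0$ and $\kappa_0>0$ such that for all $0<\kappa<\kappa_0$: for every $j$ with $|j|\le k-1$ and $I_j\neq\emptyset$, $$\min_{x\in I_j}\psi_{n,j}(x)\ge c_n\kappa,$$ and moreover $\psi_{n,k}(a_k)\ge c_n\kappa$ and $\psi_{n,-k}(-a_k)\ge c_n\kappa$.
   Context: Fix $n\ge1$. Let $h_n$ be the physicists' Hermite polynomial $h_n(y)=(-1)^ne^{y^2}\frac{d^n}{dy^n}e^{-y^2}$, $\varphi(y)=e^{-y^2/2}$, $\Psi_n=h_n\varphi$. Let $0\le z_1<z_2<\dots<z_k$ be the nonnegative zeros of $h_n$, where $k=n/2$ if $n$ is even (then $z_1>0$) and $k=(n+1)/2$ if $n$ is odd (then $z_1=0$). For $\kappa>0$ define: $a_1=\lfloor z_1/\kappa\rfloor+1$; $\beta_1=1$ if $z_1=0$ and $\beta_1=z_1/(\kappa(a_1-1))$ otherwise; for $2\le j\le k$, $a_j=\lfloor z_j/(\beta_{j-1}\kappa)\rfloor+1$ and $\beta_j=z_j/(\kappa(a_j-1))$; for $1\le j\le k-1$, $b_j=\lfloor z_{j+1}/(\beta_j\kappa)\rfloor-1$, and $b_k=\infty$. Set $I_j=[a_j,b_j]\cap\mathbb{Z}$ for $1\le j\le k$ (so $I_k=[a_k,\infty)\cap\mathbb{Z}$), $I_{-j}=[-b_j,-a_j]\cap\mathbb{Z}$ and $\beta_{-j}=\beta_j$. If $n$ is even, put $b_0=a_1-2$, $I_0=[-b_0,b_0]\cap\mathbb{Z}$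 and $\beta_0=1$; if $n$ is odd, $I_0=\emptyset$. For $x\in I_j$ set $\psi_{n,j}(x)=|h_n(\beta_j\kappa x)|\,\varphi(\beta_j\kappa x)$. *)

(* Defs.v *)
From Stdlib Require Import Reals ZArith Lia Lra.
From Coquelicot Require Import Coquelicot.
Open Scope R_scope.

Definition hermite (n : nat) (y : R) : R :=
  (-1) ^ n * exp (y ^ 2) * Derive_n (fun t => exp (- t ^ 2)) n y.

Definition phi (y : R) : R := exp (- y ^ 2 / 2).

(* k = n/2 (n even), (n+1)/2 (n odd); both equal floor((n+1)/2). *)
Definition kk (n : nat) : nat := ((n + 1) / 2)%nat.

Definition nonneg_zeros (n : nat) (z : nat -> R) : Prop :=
  (forall i j, (1 <= i)%nat -> (i < j)%nat -> (j <= kk n)%nat -> z i < z j) /\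
  (forall j, (1 <= j <= kk n)%nat -> 0 <= z j /\ hermite n (z j) = 0) /\
  (forall y, 0 <= y -> hermite n y = 0 ->
     exists j, (1 <= j <= kk n)%nat /\ y = z j).

(* (a_j, beta_j) for j >= 1 (value at j = 0 is a dummy). *)
Fixpoint abeta (z : nat -> R) (kappa : R) (j : nat) : Z * R :=
  match j with
  | O => (0%Z, 1)
  | S j' =>
      match j' with
      | O =>
          let a := (Int_part (z 1%nat / kappa) + 1)%Z in
          (a, if Req_EM_T (z 1%nat) 0 then 1
              else z 1%nat / (kappa * IZR (a - 1)))
      | S _ =>
          let bprev := snd (abeta z kappa j') in
          let a := (Int_part (z j / (bprev * kappa)) + 1)%Z in
          (a, z j / (kappa * IZR (a - 1)))
      end
  end.

Definition aa (z : nat -> R) (kappa : R) (j : nat) : Z := fst (abeta z kappa j).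
Definition beta (z : nat -> R) (kappa : R) (j : nat) : R := snd (abeta z kappa j).

Definition bb (z : nat -> R) (kappa : R) (j : nat) : Z :=
  (Int_part (z (S j) / (beta z kappa j * kappa)) - 1)%Z.

Definition inI (n : nat) (z : nat -> R) (kappa : R) (j x : Z) : Prop :=
  if (j =? 0)%Z then
    (if Nat.even n then
       let b0 := (aa z kappa 1 - 2)%Z in (- b0 <= x <= b0)%Z
     else False)
  else
    let m := Z.abs_nat j in
    if (0 <? j)%Z then
      (if (m <? kk n)%nat then (aa z kappa m <= x <= bb z kappa m)%Z
       else (aa z kappa m <= x)%Z)
    else
      (if (m <? kk n)%nat then (- bb z kappa m <= x <= - aa z kappa m)%Z
       else (x <= - aa z kappa m)%Z).

Definition betaZ (z : nat -> R) (kappa : R) (j : Z) : R :=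
  if (j =? 0)%Z then 1 else beta z kappa (Z.abs_nat j).

Definition psi (n : nat) (z : nat -> R) (kappa : R) (j x : Z) : R :=
  let y := betaZ z kappa j * kappa * IZR x in
  Rabs (hermite n y) * phi y.

(* Main.v *)
Require Import Defs.
From Stdlib Require Import Reals ZArith Lia Lra.
From Coquelicot Require Import Coquelicot.
Open Scope R_scope.

Fixpoint Hm (n : nat) (y : R) : R :=
  match n with
  | O => 1
  | S m => match m with
           | O => 2 * y
           | S p => 2 * y * Hm m y - 2 * INR (S p) * Hm p y
           end
  end.

Lemma Hm_rec p y : Hm (S p) y = 2 * y * Hm p y - 2 * INR p * Hm (p - 1) y.
Proof. destruct p; simpl. ring. replace (p - 0)%nat with p by lia. reflexivity. Qed.

Lemma is_derive_eq (f g : R -> R) y l l' :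
  (forall t, f t = g t) -> l = l' -> is_derive f y l -> is_derive g y l'.
Proof. intros E L D. subst l'. eapply is_derive_ext; eauto. Qed.

Lemma Hm_der_aux n : forall y,
  is_derive (Hm n) y (2 * INR n * Hm (n - 1) y) /\
  is_derive (Hm (S n)) y (2 * INR (S n) * Hm n y).
Proof.
  induction n as [|n IH]; intro y.
  - split.
    + simpl. replace (2 * 0 * 1) with 0 by ring. apply (is_derive_const 1).
    + simpl. replace (2 * 1 * 1) with (2 * 1) by ring.
      apply is_derive_scal. apply (is_derive_id y).
  - split; [replace (S n - 1)%nat with n by lia; apply IH|].
    destruct (IH y) as [D0 D1].
    assert (Dm := is_derive_mult (fun t => t) (Hm (S n)) y 1 _ (is_derive_id y) D1 ltac:(intros; apply Rmult_comm)).
    assert (Dm2 := is_derive_scal _ y 2 _ Dm).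
    assert (Dn := is_derive_scal _ y (2 * INR (S n)) _ D0).
    assert (Df := is_derive_minus _ _ y _ _ Dm2 Dn).
    revert Df. apply is_derive_eq.
    + intro t. simpl Hm at 3. unfold minus, plus, opp, mult; simpl. ring.
    + replace (S (S n) - 1)%nat with (S n) by lia.
      rewrite (Hm_rec n y). rewrite !S_INR. unfold minus, plus, opp, mult; simpl. ring.
Qed.

Lemma Hm_der n y : is_derive (Hm (S n)) y (2 * INR (S n) * Hm n y).
Proof. apply Hm_der_aux. Qed.

Lemma Hm_derR n y : derivable_pt_lim (Hm (S n)) y (2 * INR (S n) * Hm n y).
Proof. apply is_derive_Reals, Hm_der. Qed.

Lemma Hm_cont n y : continuity_pt (Hm n) y.
Proof.
  destruct n. simpl. apply continuity_pt_const. intros a b; reflexivity.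
  apply derivable_continuous_pt. exists (2 * INR (S n) * Hm n y). apply Hm_derR.
Qed.

Lemma Hm_par n y : Hm n (- y) = (-1) ^ n * Hm n y.
Proof.
  assert (forall n, Hm n (-y) = (-1)^n * Hm n y /\ Hm (S n) (-y) = (-1)^(S n) * Hm (S n) y).
  { induction n0 as [|n0 IH]. simpl; split; ring.
    split. apply IH. destruct IH as [A B].
    change (Hm (S (S n0)) (-y)) with (2 * (-y) * Hm (S n0) (-y) - 2 * INR (S n0) * Hm n0 (-y)).
    change (Hm (S (S n0)) y) with (2 * y * Hm (S n0) y - 2 * INR (S n0) * Hm n0 y).
    rewrite A, B. simpl. ring. }
  apply H.
Qed.

Lemma Hm_abs_par n y : Rabs (Hm n (- y)) = Rabs (Hm n y).
Proof.
  rewrite Hm_par, Rabs_mult, pow_1_abs. ring.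
Qed.

Lemma Hm_simple p a : Hm (S p) a = 0 -> Hm p a = 0 -> False.
Proof.
  revert a; induction p; intros a H1 H0.
  - simpl in H0. lra.
  - apply (IHp a); auto.
    change (Hm (S (S p)) a) with (2 * a * Hm (S p) a - 2 * INR (S p) * Hm p a) in H1.
    rewrite H0 in H1. assert (0 < INR (S p)) by (apply lt_0_INR; lia).
    apply Rmult_integral in H1 as [H1|H1]; [lra | exact H1] || nra.
Qed.

Lemma hermite_Hm n y : hermite n y = Hm n y.
Proof.
  assert (K : forall n t, Derive_n (fun t => exp (- t ^ 2)) n t = (-1) ^ n * Hm n t * exp (- t ^ 2)).
  { induction n0 as [|n0 IH]; intro t. simpl. ring.
    change (Derive_n (fun t => exp (- t ^ 2)) (S n0) t) with (Derive (Derive_n (fun t => exp (- t ^ 2)) n0) t).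
    rewrite (Derive_ext _ _ t IH).
    apply is_derive_unique.
    assert (De : is_derive (fun t => exp (- t ^ 2)) t (exp (- t^2) * (- (2 * t)))).
    { auto_derive; auto. replace (t * (t * 1)) with (t ^ 2) by ring. ring. }
    assert (DH : is_derive (Hm n0) t (2 * INR n0 * Hm (n0 - 1) t)) by apply Hm_der_aux.
    assert (D1 := is_derive_scal _ t ((-1)^n0) _ DH).
    assert (D := is_derive_mult _ _ t _ _ D1 De ltac:(intros; apply Rmult_comm)).
    revert D. apply is_derive_eq.
    + intro u. unfold mult; simpl. ring.
    + rewrite (Hm_rec n0 t). unfold plus, mult; simpl. ring. }
  unfold hermite. rewrite K.
  replace ((-1) ^ n * exp (y ^ 2) * ((-1) ^ n * Hm n y * exp (- y ^ 2)))
    with (((-1)^n * (-1)^n) * (exp (y^2) * exp (- y^2)) * Hm n y) by ring.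
  rewrite <- exp_plus, <- Rpow_mult_distr. replace (y^2 + - y^2) with 0 by ring.
  rewrite exp_0. replace ((-1) * (-1)) with 1 by ring. rewrite pow1. ring.
Qed.
Lemma cont_eps f x : continuity_pt f x -> forall eps, 0 < eps ->
  exists d, 0 < d /\ forall y, Rabs (y - x) < d -> Rabs (f y - f x) < eps.
Proof.
  intros H eps He.
  unfold continuity_pt, continue_in, limit1_in, limit_in in H.
  destruct (H eps He) as [alp [Ha Hb]]. exists alp; split; auto.
  intros y Hy. destruct (Req_dec y x) as [->|Hne].
  - rewrite Rminus_diag, Rabs_R0; lra.
  - apply (Hb y). split. split; [exact I| auto]. exact Hy.
Qed.

Lemma near_zero p a : Hm (S p) a = 0 -> exists m r, 0 < m /\ 0 < r /\
  forall y, Rabs (y - a) <= r -> m * Rabs (y - a) <= Rabs (Hm (S p) y).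
Proof.
  intro Ha.
  set (f' := fun t => 2 * INR (S p) * Hm p t).
  assert (HD : f' a <> 0).
  { unfold f'. intro E. assert (0 < INR (S p)) by (apply lt_0_INR; lia).
    apply (Hm_simple p a Ha). nra. }
  assert (Cf : continuity_pt f' a).
  { unfold f'. apply continuity_pt_scal. apply Hm_cont. }
  assert (HDp : 0 < Rabs (f' a) / 2) by (apply Rabs_pos_lt in HD; lra).
  destruct (cont_eps f' a Cf _ HDp) as [alp [Halp Hc]].
  exists (Rabs (f' a) / 2), (alp / 2). split; [lra | split; [lra|]].
  intros y Hy.
  assert (Key : forall c, Rabs (c - a) < alp -> Rabs (f' a) / 2 <= Rabs (f' c)).
  { intros c Hca. specialize (Hc c Hca).
    assert (Rabs (f' a) <= Rabs (f' c) + Rabs (f' c - f' a)).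
    { replace (f' a) with (f' c - (f' c - f' a)) at 1 by ring.
      eapply Rle_trans; [apply Rabs_triang|]. rewrite Rabs_Ropp. lra. }
    lra. }
  destruct (Rtotal_order y a) as [Hlt|[Heq|Hgt]].
  - destruct (MVT_cor2 (Hm (S p)) f' y a Hlt (fun c _ => Hm_derR p c)) as [c [Hc1 Hc2]].
    rewrite Ha in Hc1.
    assert (E : Hm (S p) y = - (f' c * (a - y))) by lra.
    rewrite E, Rabs_Ropp, Rabs_mult.
    replace (Rabs (y - a)) with (Rabs (a - y)) by (rewrite <- Rabs_Ropp; f_equal; ring).
    apply Rmult_le_compat_r; [apply Rabs_pos|]. apply Key.
    rewrite Rabs_left by lra. rewrite Rabs_left in Hy by lra. lra.
  - subst. rewrite Rminus_diag, Rabs_R0, Rmult_0_r. apply Rabs_pos.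
  - destruct (MVT_cor2 (Hm (S p)) f' a y Hgt (fun c _ => Hm_derR p c)) as [c [Hc1 Hc2]].
    rewrite Ha, Rminus_0_r in Hc1. rewrite Hc1, Rabs_mult.
    apply Rmult_le_compat_r; [apply Rabs_pos|]. apply Key.
    rewrite Rabs_right by lra. rewrite Rabs_right in Hy by lra. lra.
Qed.

Lemma tail_est p a : Hm (S p) a = 0 -> exists c d, 0 < c /\ 0 < d /\
  forall e, 0 < e <= d -> c * e <= Rabs (Hm (S p) (a + e)).
Proof.
  intro Ha. destruct (near_zero p a Ha) as [m [r [Hm0 [Hr H]]]].
  exists m, r. split; auto. split; auto. intros e He.
  specialize (H (a + e)). replace (a + e - a) with e in H by ring.
  rewrite Rabs_right in H by lra. apply H. lra.
Qed.

Lemma gap_est p a b : a < b -> Hm (S p) a = 0 -> Hm (S p) b = 0 ->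
  (forall t, a < t < b -> Hm (S p) t <> 0) -> exists c d, 0 < c /\ 0 < d /\
  forall e y, 0 < e <= d -> a + e <= y <= b - e -> c * e <= Rabs (Hm (S p) y).
Proof.
  intros Hab Ha Hb Hnz.
  destruct (near_zero p a Ha) as [ma [ra [Hma [Hra Na]]]].
  destruct (near_zero p b Hb) as [mb [rb [Hmb [Hrb Nb]]]].
  set (r := Rmin (Rmin ra rb) ((b - a) / 3)).
  assert (Hr1 : r <= ra) by (unfold r; eapply Rle_trans; [apply Rmin_l|]; apply Rmin_l).
  assert (Hr2 : r <= rb) by (unfold r; eapply Rle_trans; [apply Rmin_l|]; apply Rmin_r).
  assert (Hr3 : r <= (b - a) / 3) by (unfold r; apply Rmin_r).
  assert (Hr0 : 0 < r) by (unfold r; repeat apply Rmin_glb_lt; lra).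
  destruct (continuity_ab_min (fun y => Rabs (Hm (S p) y)) (a + r) (b - r) ltac:(lra)
     (fun c _ => continuity_pt_comp _ _ _ (Hm_cont _ c) (Rcontinuity_abs _))) as [mx [Hmx Hmxr]].
  simpl in Hmx.
  assert (Hm1 : 0 < Rabs (Hm (S p) mx)) by (apply Rabs_pos_lt, Hnz; lra).
  set (mm := Rabs (Hm (S p) mx)) in *.
  exists (Rmin (Rmin ma mb) (mm / r)), r.
  split. { repeat apply Rmin_glb_lt; try lra. apply Rdiv_lt_0_compat; lra. }
  split; auto.
  intros e y He Hy.
  assert (Hc1 : Rmin (Rmin ma mb) (mm / r) <= ma) by (eapply Rle_trans; [apply Rmin_l|]; apply Rmin_l).
  assert (Hc2 : Rmin (Rmin ma mb) (mm / r) <= mb) by (eapply Rle_trans; [apply Rmin_l|]; apply Rmin_r).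
  assert (Hc3 : Rmin (Rmin ma mb) (mm / r) <= mm / r) by apply Rmin_r.
  set (c := Rmin (Rmin ma mb) (mm / r)) in *.
  assert (0 < c) by (unfold c; repeat apply Rmin_glb_lt; try lra; apply Rdiv_lt_0_compat; lra).
  destruct (Rle_lt_dec y (a + r)) as [Y1|Y1].
  - specialize (Na y). rewrite Rabs_right in Na by lra.
    eapply Rle_trans; [|apply Na; lra].
    apply Rle_trans with (ma * e); [apply Rmult_le_compat_r; lra|]. apply Rmult_le_compat_l; lra.
  - destruct (Rle_lt_dec (b - r) y) as [Y2|Y2].
    + specialize (Nb y). rewrite Rabs_left1 in Nb by lra.
      eapply Rle_trans; [|apply Nb; lra].
      apply Rle_trans with (mb * e); [apply Rmult_le_compat_r; lra|]. apply Rmult_le_compat_l; lra.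
    + eapply Rle_trans; [|apply Hmx; lra].
      apply Rle_trans with (mm / r * e); [apply Rmult_le_compat_r; lra|].
      apply Rle_trans with (mm / r * r); [apply Rmult_le_compat_l; [apply Rlt_le, Rdiv_lt_0_compat|]; lra|].
      unfold Rdiv. rewrite Rmult_assoc, Rinv_l by lra. rewrite Rmult_1_r. apply Rle_refl.
Qed.

Lemma floor_facts q : 2 <= q ->
  1 <= IZR (Int_part q) /\ IZR (Int_part q) <= q /\ q <= 2 * IZR (Int_part q).
Proof. intro H. destruct (base_Int_part q). lra. Qed.

Lemma Int_part_0 : Int_part 0 = 0%Z.
Proof.
  destruct (base_Int_part 0) as [A B].
  assert (C : (Int_part 0 <= 0)%Z) by (apply le_IZR; lra).
  assert (D : (-1 < Int_part 0)%Z) by (apply lt_IZR; lra). lia.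
Qed.

Lemma beta_step (zj b k q F : R) : 0 < b -> 0 < k -> 1 <= F -> F <= q <= 2 * F ->
  q * (b * k) = zj -> b <= zj / (k * F) <= 2 * b /\ zj / (k * F) * k * F = zj.
Proof.
  intros Hb Hk HF Hq E.
  assert (R1 : zj / (k * F) = q * b / F) by (subst; field; lra).
  assert (R2 : q * b / F * F = q * b) by (field; lra).
  rewrite R1. set (r := q * b / F) in *.
  split; [split|].
  - nra.
  - nra.
  - rewrite <- E. replace (r * k * F) with ((r * F) * k) by ring. rewrite R2. ring.
Qed.

Lemma abeta_1 z k : abeta z k 1 =
  ((Int_part (z 1%nat / k) + 1)%Z, if Req_EM_T (z 1%nat) 0 then 1
     else z 1%nat / (k * IZR (Int_part (z 1%nat / k) + 1 - 1))).
Proof. reflexivity. Qed.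

Lemma abeta_SS z k j : abeta z k (S (S j)) =
  ((Int_part (z (S (S j)) / (beta z k (S j) * k)) + 1)%Z,
   z (S (S j)) / (k * IZR (Int_part (z (S (S j)) / (beta z k (S j) * k)) + 1 - 1))).
Proof. reflexivity. Qed.

Lemma beta_facts (z : nat -> R) (K : nat) (zeta kap : R) :
  0 < kap -> 0 < zeta -> 2 ^ (S K) * kap <= zeta -> 0 <= z 1%nat ->
  (forall j, (2 <= j <= K)%nat -> zeta <= z j) ->
  (0 < z 1%nat -> zeta <= z 1%nat) ->
  forall j, (1 <= j <= K)%nat ->
    1 <= beta z kap j <= 2 ^ j /\ beta z kap j * kap * IZR (aa z kap j - 1) = z j.
Proof.
  intros Hk Hz HK Hz1 Hzj Hz1' j. induction j as [|j IH]; intro Hj; [lia|].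
  destruct j as [|j].
  - unfold beta, aa. rewrite abeta_1. simpl fst; simpl snd.
    replace (Int_part (z 1%nat / kap) + 1 - 1)%Z with (Int_part (z 1%nat / kap)) by ring.
    destruct (Req_EM_T (z 1%nat) 0) as [E|E].
    + rewrite E. unfold Rdiv. rewrite Rmult_0_l, Int_part_0. simpl. lra.
    + assert (P : 0 < z 1%nat) by lra. specialize (Hz1' P).
      assert (HK1 : 1 <= 2 ^ K) by (apply pow_R1_Rle; lra).
      set (q := z 1%nat / kap).
      assert (Eq : q * (1 * kap) = z 1%nat) by (unfold q; field; lra).
      assert (Q2 : 2 <= q).
      { unfold q. apply Rmult_le_reg_r with kap; auto. unfold Rdiv.
        rewrite Rmult_assoc, Rinv_l, Rmult_1_r by lra. simpl in HK. nra. }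
      destruct (floor_facts q Q2) as [F1 [F2 F3]].
      destruct (beta_step (z 1%nat) 1 kap q (IZR (Int_part q)) ltac:(lra) Hk F1 ltac:(lra) Eq) as [[B1 B2] B3].
      simpl. lra.
  - assert (IH' := IH ltac:(lia)). destruct IH' as [[Bp1 Bp2] _].
    unfold aa; change (beta z kap (S (S j))) with (snd (abeta z kap (S (S j)))); rewrite abeta_SS. simpl fst; simpl snd.
    set (bp := beta z kap (S j)) in *.
    set (q := z (S (S j)) / (bp * kap)).
    replace (Int_part q + 1 - 1)%Z with (Int_part q) by ring.
    assert (Zj : zeta <= z (S (S j))) by (apply Hzj; lia).
    assert (Eq : q * (bp * kap) = z (S (S j))) by (unfold q; field; lra).
    assert (Hb : 2 ^ S j <= 2 ^ K) by (apply Rle_pow; lia || lra).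
    assert (Q2 : 2 <= q).
    { unfold q. apply Rmult_le_reg_r with (bp * kap); [nra|]. unfold Rdiv.
      rewrite Rmult_assoc, Rinv_l, Rmult_1_r by nra. simpl in HK. nra. }
    destruct (floor_facts q Q2) as [F1 [F2 F3]].
    destruct (beta_step (z (S (S j))) bp kap q (IZR (Int_part q)) ltac:(lra) Hk F1 ltac:(lra) Eq) as [[B1 B2] B3].
    change (2 ^ S (S j)) with (2 * 2 ^ S j). lra.
Qed.

Lemma fin_min (K : nat) (P : nat -> R -> R -> Prop) :
  (forall i c c' d d', P i c d -> 0 < c' <= c -> 0 < d' <= d -> P i c' d') ->
  (forall i, (1 <= i <= K)%nat -> exists c d, 0 < c /\ 0 < d /\ P i c d) ->
  exists c d, 0 < c /\ 0 < d /\ forall i, (1 <= i <= K)%nat -> P i c d.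
Proof.
  intros Mono H. induction K as [|K IH].
  - exists 1, 1. split; [lra|split;[lra|]]. intros; lia.
  - destruct IH as [c1 [d1 [Hc1 [Hd1 P1]]]]. { intros i Hi. apply H. lia. }
    destruct (H (S K) ltac:(lia)) as [c2 [d2 [Hc2 [Hd2 P2]]]].
    exists (Rmin c1 c2), (Rmin d1 d2).
    assert (0 < Rmin c1 c2) by (apply Rmin_glb_lt; lra).
    assert (0 < Rmin d1 d2) by (apply Rmin_glb_lt; lra).
    split; auto. split; auto. intros i Hi.
    destruct (Nat.eq_dec i (S K)) as [->|Hne].
    + eapply Mono; [apply P2| split; auto; apply Rmin_r | split; auto; apply Rmin_r].
    + eapply Mono; [apply P1; lia| split; auto; apply Rmin_l | split; auto; apply Rmin_l].
Qed.

Lemma exp_le a b : a <= b -> exp a <= exp b.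
Proof. intro H. destruct (Rle_lt_or_eq_dec _ _ H) as [H1|H1]; [left; apply exp_increasing; auto | rewrite H1; lra]. Qed.

Lemma final_bound n c' M y e kap : 0 < c' -> 0 <= M -> 0 < kap <= e ->
  c' * e <= Rabs (Hm n y) -> Rabs y <= M ->
  c' * phi M * kap <= Rabs (hermite n y) * phi y.
Proof.
  intros Hc HM He Hy HyM. rewrite hermite_Hm.
  assert (P1 : 0 < phi M) by (unfold phi; apply exp_pos).
  assert (P2 : phi M <= phi y).
  { unfold phi. apply exp_le. rewrite <- (pow2_abs y).
    assert (0 <= Rabs y) by apply Rabs_pos. nra. }
  assert (0 <= Rabs (Hm n y)) by apply Rabs_pos.
  apply Rle_trans with (c' * e * phi M); [rewrite Rmult_assoc, Rmult_assoc; apply Rmult_le_compat_l; [lra|]; rewrite Rmult_comm; apply Rmult_le_compat_r; lra|].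
  apply Rle_trans with (Rabs (Hm n y) * phi M).
  - apply Rmult_le_compat_r; lra.
  - apply Rmult_le_compat_l; lra.
Qed.

Lemma le_div_mul a b x : 0 < b -> x <= a / b -> b * x <= a.
Proof. intros Hb H. replace a with (b * (a / b)) by (field; lra). apply Rmult_le_compat_l; lra. Qed.

Lemma y_range bk X A B zm zs : 0 < bk -> bk * (A - 1) = zm -> A <= X <= B ->
  B <= zs / bk - 1 -> zm + bk <= bk * X <= zs - bk.
Proof.
  intros Hb E HX HB. assert (F : bk * (zs / bk) = zs) by (field; lra).
  split; nra.
Qed.

Lemma betaZ_pos z kap m : (1 <= m)%nat -> betaZ z kap (Z.of_nat m) = beta z kap m.
Proof.
  intro H. unfold betaZ. replace (Z.of_nat m =? 0)%Z with false by (symmetry; apply Z.eqb_neq; lia).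
  rewrite Zabs2Nat.id. reflexivity.
Qed.

Lemma betaZ_neg z kap m : (1 <= m)%nat -> betaZ z kap (- Z.of_nat m) = beta z kap m.
Proof.
  intro H. unfold betaZ. replace (- Z.of_nat m =? 0)%Z with false by (symmetry; apply Z.eqb_neq; lia).
  f_equal. lia.
Qed.

Theorem lemma2p8 : forall (n : nat), (1 <= n)%nat ->
  forall z : nat -> R, nonneg_zeros n z ->
  exists c kappa0 : R, 0 < c /\ 0 < kappa0 /\
    forall kappa, 0 < kappa < kappa0 ->
      (forall j : Z, (Z.abs j <= Z.of_nat (kk n) - 1)%Z ->
         (exists x, inI n z kappa j x) ->
         forall x, inI n z kappa j x -> c * kappa <= psi n z kappa j x) /\
      c * kappa <= psi n z kappa (Z.of_nat (kk n)) (aa z kappa (kk n)) /\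
      c * kappa <= psi n z kappa (- Z.of_nat (kk n)) (- aa z kappa (kk n)).
Proof.
  intros n Hn z [Zmon [Zz Zall]].
  destruct n as [|p]; [lia|].
  set (k := kk (S p)) in *.
  assert (Hk1 : (1 <= k)%nat) by (unfold k, kk; apply Nat.div_le_lower_bound; lia).
  assert (Zmono : forall i j, (1 <= i)%nat -> (i <= j)%nat -> (j <= k)%nat -> z i <= z j).
  { intros i j H1 H2 H3. destruct (Nat.eq_dec i j) as [->|Hne]; [lra|].
    left. apply Zmon; lia. }
  assert (Zge : forall j, (1 <= j <= k)%nat -> 0 <= z j) by (intros j Hj; apply Zz; auto).
  assert (Zh : forall j, (1 <= j <= k)%nat -> Hm (S p) (z j) = 0)
    by (intros j Hj; rewrite <- hermite_Hm; apply Zz; auto).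
  assert (Zall' : forall t, 0 <= t -> Hm (S p) t = 0 -> exists j, (1 <= j <= k)%nat /\ t = z j)
    by (intros t Ht E; apply Zall; auto; rewrite hermite_Hm; auto).
  assert (Zeta : exists zeta, 0 < zeta /\ (forall j, (2 <= j <= k)%nat -> zeta <= z j) /\
                   (0 < z 1%nat -> zeta <= z 1%nat)).
  { destruct (Rlt_dec 0 (z 1%nat)) as [P|P].
    - exists (z 1%nat). split; auto. split; [|lra]. intros j Hj. apply Zmono; lia.
    - destruct (le_lt_dec 2 k) as [K2|K2].
      + exists (z 2%nat). split.
        * assert (z 1%nat < z 2%nat) by (apply Zmon; lia). assert (0 <= z 1%nat) by (apply Zge; lia). lra.
        * split; [|intro; lra]. intros j Hj. apply Zmono; lia.
      + exists 1. split; [lra|]. split; [intros; lia| intro; lra]. }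
  destruct Zeta as [zeta [Hzeta [Zeta1 Zeta2]]].
  destruct (fin_min (k - 1) (fun i c d => forall e y, 0 < e <= d -> z i + e <= y <= z (S i) - e ->
                                 c * e <= Rabs (Hm (S p) y))) as [cg [dg [Hcg [Hdg G]]]].
  { intros i c c' d d' H Hc Hd e y He Hy. specialize (H e y ltac:(lra) Hy). nra. }
  { intros i Hi. apply gap_est.
    - apply Zmon; lia.
    - apply Zh; lia.
    - apply Zh; lia.
    - intros t Ht E. assert (0 <= z i) by (apply Zge; lia).
      destruct (Zall' t ltac:(lra) E) as [j [Hj ->]].
      destruct (le_lt_dec j i).
      + assert (z j <= z i) by (apply Zmono; lia). lra.
      + assert (z (S i) <= z j) by (apply Zmono; lia). lra. }
  assert (Mid : exists c0 d0, 0 < c0 /\ 0 < d0 /\ (0 < z 1%nat -> forall e y, 0 < e <= d0 ->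
                  - z 1%nat + e <= y <= z 1%nat - e -> c0 * e <= Rabs (Hm (S p) y))).
  { destruct (Rlt_dec 0 (z 1%nat)) as [P|P].
    - destruct (gap_est p (- z 1%nat) (z 1%nat)) as [c0 [d0 [A [B C]]]].
      + lra.
      + rewrite Hm_par, Zh by lia. ring.
      + apply Zh; lia.
      + intros t Ht E. destruct (Rle_dec 0 t) as [T|T].
        * destruct (Zall' t T E) as [j [Hj ->]].
          assert (z 1%nat <= z j) by (apply Zmono; lia). lra.
        * assert (E' : Hm (S p) (- t) = 0) by (rewrite Hm_par, E; ring).
          destruct (Zall' (- t) ltac:(lra) E') as [j [Hj Ej]].
          assert (z 1%nat <= z j) by (apply Zmono; lia). lra.
      + exists c0, d0. split; [exact A|]. split; [exact B|]. intros _. exact C.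
    - exists 1, 1. split; [lra|]. split; [lra|]. intro; lra. }
  destruct Mid as [c0 [d0 [Hc0 [Hd0 Mid]]]].
  destruct (tail_est p (z k) ltac:(apply Zh; lia)) as [ct [dt [Hct [Hdt T]]]].
  set (c' := Rmin cg (Rmin c0 ct)).
  set (d := Rmin dg (Rmin d0 dt)).
  assert (Hc' : 0 < c') by (unfold c'; repeat apply Rmin_glb_lt; lra).
  assert (Hd : 0 < d) by (unfold d; repeat apply Rmin_glb_lt; lra).
  assert (c'1 : c' <= cg) by apply Rmin_l.
  assert (c'2 : c' <= c0) by (eapply Rle_trans; [apply Rmin_r|apply Rmin_l]).
  assert (c'3 : c' <= ct) by (eapply Rle_trans; [apply Rmin_r|apply Rmin_r]).
  assert (d1 : d <= dg) by apply Rmin_l.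
  assert (d2 : d <= d0) by (eapply Rle_trans; [apply Rmin_r|apply Rmin_l]).
  assert (d3 : d <= dt) by (eapply Rle_trans; [apply Rmin_r|apply Rmin_r]).
  set (M := z k + 1).
  assert (HzK : 0 <= z k) by (apply Zge; lia).
  assert (HM : 0 <= M) by (unfold M; lra).
  assert (P2k : 0 < 2 ^ k) by (apply pow_lt; lra).
  assert (P2k1 : 1 <= 2 ^ k) by (apply pow_R1_Rle; lra).
  assert (P2Sk : 0 < 2 ^ S k) by (apply pow_lt; lra).
  exists (c' * phi M), (Rmin (zeta / 2 ^ S k) (Rmin (d / 2 ^ k) (1 / 2 ^ k))).
  split. { apply Rmult_lt_0_compat; auto. unfold phi; apply exp_pos. }
  split. { repeat apply Rmin_glb_lt; apply Rdiv_lt_0_compat; lra. }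
  intros kap [Hkap Hkap0].
  assert (K1 : 2 ^ S k * kap <= zeta).
  { apply le_div_mul; auto. left. eapply Rlt_le_trans; [exact Hkap0|apply Rmin_l]. }
  assert (K2 : 2 ^ k * kap <= d).
  { apply le_div_mul; auto. left. eapply Rlt_le_trans; [exact Hkap0|].
    eapply Rle_trans; [apply Rmin_r|apply Rmin_l]. }
  assert (K3 : 2 ^ k * kap <= 1).
  { apply le_div_mul; auto. left. eapply Rlt_le_trans; [exact Hkap0|].
    eapply Rle_trans; [apply Rmin_r|apply Rmin_r]. }
  assert (BF := beta_facts z k zeta kap Hkap Hzeta K1 ltac:(apply Zge; lia) Zeta1 Zeta2).
  assert (Pow : forall m, (m <= k)%nat -> 2 ^ m <= 2 ^ k) by (intros; apply Rle_pow; lra || lia).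
  split; [|split].
  - intros j Hj _ x Hx. unfold psi; cbv zeta.
    unfold betaZ. revert Hx. unfold inI. destruct (j =? 0)%Z eqn:Ej; intro Hx.
    + destruct (Nat.even (S p)); [|contradiction].
      assert (Ea : aa z kap 1 = (Int_part (z 1%nat / kap) + 1)%Z) by (unfold aa; rewrite abeta_1; reflexivity).
      rewrite Ea in Hx.
      destruct (base_Int_part (z 1%nat / kap)) as [F1 F2].
      destruct Hx as [X1 X2]. apply IZR_le in X1. apply IZR_le in X2.
      rewrite opp_IZR, minus_IZR, plus_IZR in X1. rewrite minus_IZR, plus_IZR in X2.
      assert (Fz : kap * (z 1%nat / kap) = z 1%nat) by (field; lra).
      assert (Y1 : kap * IZR x <= z 1%nat - kap) by nra.
      assert (Y2 : - z 1%nat + kap <= kap * IZR x) by nra.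
      destruct (Rlt_dec 0 (z 1%nat)) as [P|P].
      * apply (final_bound _ c' M _ kap kap); auto; [lra| |].
        -- apply Rle_trans with (c0 * kap); [nra|]. rewrite Rmult_1_l.
           apply Mid; auto. split; [lra|]. nra.
        -- rewrite Rmult_1_l. apply Rabs_le. assert (z 1%nat <= z k) by (apply Zmono; lia).
           unfold M; split; lra.
      * assert (0 <= z 1%nat) by (apply Zge; lia). lra.
    + apply Z.eqb_neq in Ej.
      assert (Hm1 : (1 <= Z.abs_nat j <= k - 1)%nat) by lia.
      replace (Z.abs_nat j <? kk (S p))%nat with true in Hx by (symmetry; apply Nat.ltb_lt; fold k; lia).
      set (m := Z.abs_nat j) in *.
      destruct (BF m ltac:(lia)) as [[B1 B2] B3].
      set (b := beta z kap m) in *.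
      assert (Ebb : bb z kap m = (Int_part (z (S m) / (b * kap)) - 1)%Z) by reflexivity.
      destruct (base_Int_part (z (S m) / (b * kap))) as [F1 F2].
      assert (Em : 2 ^ m <= 2 ^ k) by (apply Pow; lia).
      assert (Hbk : 0 < b * kap) by nra.
      assert (He : b * kap <= dg) by nra.
      assert (Hzs : z (S m) <= z k) by (apply Zmono; lia).
      assert (Hzm : 0 <= z m) by (apply Zge; lia).
      destruct (0 <? j)%Z.
      * destruct Hx as [X1 X2]. apply IZR_le in X1. apply IZR_le in X2.
        rewrite Ebb, minus_IZR in X2.
        rewrite minus_IZR in B3.
        assert (Y := y_range (b * kap) (IZR x) (IZR (aa z kap m)) _ (z m) (z (S m)) Hbk
                        ltac:(rewrite <- B3; ring) (conj X1 X2) ltac:(lra)).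
        apply (final_bound _ c' M _ (b * kap) kap); auto; [nra| |].
        -- apply Rle_trans with (cg * (b * kap)); [nra|]. apply (G m); [lia|lra|lra].
        -- apply Rabs_le. unfold M. split; lra.
      * destruct Hx as [X1 X2]. apply IZR_le in X1. apply IZR_le in X2.
        rewrite opp_IZR, Ebb, minus_IZR in X1. rewrite opp_IZR in X2.
        rewrite minus_IZR in B3.
        assert (Y : z m + b * kap <= b * kap * (- IZR x) <= z (S m) - b * kap).
        { apply (y_range (b * kap) (- IZR x) (IZR (aa z kap m)) (IZR (Int_part (z (S m) / (b * kap))) - 1)); auto; lra. }
        apply (final_bound _ c' M _ (b * kap) kap); auto; [nra| |].
        -- rewrite <- Hm_abs_par. apply Rle_trans with (cg * (b * kap)); [nra|].
           apply (G m); [lia|lra|lra].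
        -- apply Rabs_le. unfold M. split; lra.
  - unfold psi; cbv zeta. rewrite betaZ_pos by lia.
    destruct (BF k ltac:(lia)) as [[B1 B2] B3].
    rewrite minus_IZR in B3.
    set (b := beta z kap k) in *.
    assert (Hbk : 0 < b * kap) by nra.
    assert (Ey : b * kap * IZR (aa z kap k) = z k + b * kap) by (rewrite <- B3; ring).
    rewrite Ey.
    apply (final_bound _ c' M _ (b * kap) kap); auto; [nra| |].
    + apply Rle_trans with (ct * (b * kap)); [nra|]. apply T. nra.
    + apply Rabs_le. unfold M. split; nra.
  - unfold psi; cbv zeta. rewrite betaZ_neg by lia.
    destruct (BF k ltac:(lia)) as [[B1 B2] B3].
    rewrite minus_IZR in B3.
    set (b := beta z kap k) in *.
    assert (Hbk : 0 < b * kap) by nra.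
    assert (Ey : b * kap * IZR (- aa z kap k) = - (z k + b * kap)) by (rewrite opp_IZR, <- B3; ring).
    rewrite Ey.
    apply (final_bound _ c' M _ (b * kap) kap); auto; [nra| |].
    + rewrite Hm_abs_par. apply Rle_trans with (ct * (b * kap)); [nra|]. apply T. nra.
    + apply Rabs_le. unfold M. split; nra.
Qed.
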